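(* Let $c,h,\alpha,\beta\in\mathbb{C}$, $l,\gamma\in\mathbb{C}^*$, and let $M$ be a nonzero $\mathcal{D}$-submodule of $L(c,h,l)\otimes A(\alpha,\beta,\gamma)$. Then (a) there exists $k\in\frac12\mathbb{Z}$ with $\bar{\mathbf{1}}\otimes v_k\in M$; and (b) there exists $k\in\frac12\mathbb{Z}$ such that $\bar{\mathbf{1}}\otimes v_i\in M$ for all $i\in\frac12\mathbb{Z}$ with $i\geq k$.
   Context: The mirror-twisted Heisenberg–Virasoro algebra $\mathcal{D}$ is the complex Lie algebra with basis $\{d_m,h_r,\mathbf{c},\mathbf{l}: m\in\mathbb{Z}, r\in\frac12+\mathbb{Z}\}$ and brackets $[d_m,d_n]=(m-n)d_{m+n}+\frac{m^3-m}{12}\delta_{m+n,0}\mathbf{c}$, $[d_m,h_r]=-rh_{m+r}$, $[h_r,h_s]=r\delta_{r+s,0}\mathbf{l}$, with $\mathbf{c},\mathbf{l}$ central. $\mathcal{D}^{+}=\mathrm{span}\{d_{n},h_{r}: n\in\mathbb{N}, r\in\frac12+\mathbb{Z}_{\ge0}\}$, $\mathcal{D}^0=\mathrm{span}\{d_0,\mathbf{c},\mathbf{l}\}$. $L(c,h,l)$ is the irreducible quotient of the Verma module $M(c,h,l)=U(\mathcal{D})\otimes_{U(\mathcal{D}^0\oplus\mathcal{D}^+)}\mathbb{C}\mathbf{1}$ ($d_0\mathbf{1}=h\mathbf{1}$, $\mathbf{c}\mathbf{1}=c\mathbf{1}$, $\mathbf{l}\mathbf{1}=l\mathbf{1}$,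 $\mathcal{D}^+\mathbf{1}=0$) by its unique maximal proper submodule, and $\bar{\mathbf{1}}$ is the image of $\mathbf{1}$. $A(\alpha,\beta,\gamma)$ is the $\mathcal{D}$-module with basis $\{v_k:k\in\frac12\mathbb{Z}\}$ and $d_mv_k=(\alpha+\beta m-k)v_{m+k}$, $h_rv_n=v_{n+r}$ for $n\in\mathbb{Z}$, $h_rv_s=\gamma v_{r+s}$ for $s\in\frac12+\mathbb{Z}$, $\mathbf{c},\mathbf{l}$ acting as $0$. Tensor products carry the action $x(v\otimes w)=xv\otimes w+v\otimes xw$. *)

(* Defs.v *)
From HB Require Import structures.
From mathcomp Require Import all_boot all_order all_algebra.
From mathcomp Require Import complex Rstruct.
Set Implicit Arguments. Unset Strict Implicit. Unset Printing Implicit Defensive.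
Import Order.TTheory GRing.Theory Num.Theory.
Local Open Scope ring_scope.

Definition CC : numClosedFieldType := complex Rdefinitions.R.

(* Indexing conventions.
   - d_m  (m : int)                    is  dop m.
   - h_r  (r in 1/2 + Z) with r = j + 1/2 (j : int) is  hop j.
   - c, l (central elements)           are cop, lop.
   - v_k  (k in 1/2 Z) with k = n / 2 (n : int) is indexed by n. *)

Section Dalg.
Variable F : fieldType.

Definition half_odd (j : int) : F := (2 * j + 1)%:~R / 2%:R.
Definition half_int (n : int) : F := n%:~R / 2%:R.

Variable V : lmodType F.

Definition is_lin (f : V -> V) : Prop :=
  forall (a : F) (u v : V), f (a *: u + v) = a *: f u + f v.

(* A representation of the mirror-twisted Heisenberg-Virasoro algebra D on V:
   the basis elements act by linear operators satisfying the defining brackets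
   (as commutators of operators), with c and l central. *)
Definition is_Dmodule (dop hop : int -> V -> V) (cop lop : V -> V) : Prop :=
  [/\ [/\ (forall m, is_lin (dop m)), (forall j, is_lin (hop j)), is_lin cop & is_lin lop],
      (forall (m n : int) v, dop m (dop n v) - dop n (dop m v) =
          (m - n)%:~R *: dop (m + n) v
          + (if m + n == 0 then ((m ^+ 3 - m)%:~R / 12%:R) *: cop v else 0)),
      (forall (m j : int) v, dop m (hop j v) - hop j (dop m v) =
          - half_odd j *: hop (m + j) v),
      (forall (i j : int) v, hop i (hop j v) - hop j (hop i v) =
          (if i + j + 1 == 0 then half_odd i *: lop v else 0)) &
      [/\ (forall m v, cop (dop m v) = dop m (cop v)),
          (forall j v, cop (hop j v) = hop j (cop v)),
          (forall m v, lop (dop m v) = dop m (lop v)),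
          (forall j v, lop (hop j v) = hop j (lop v)) &
          (forall v, cop (lop v) = lop (cop v))]].

Definition is_Dsubmodule (dop hop : int -> V -> V) (cop lop : V -> V)
  (S : V -> Prop) : Prop :=
  [/\ S 0, (forall (a : F) u v, S u -> S v -> S (a *: u + v)),
      (forall m v, S v -> S (dop m v)), (forall j v, S v -> S (hop j v)) &
      [/\ (forall v, S v -> S (cop v)) & (forall v, S v -> S (lop v))]].

(* V is irreducible: every nonzero submodule is all of V (and V <> 0, which is
   guaranteed below by v0 <> 0). *)
Definition Dirreducible (dop hop : int -> V -> V) (cop lop : V -> V) : Prop :=
  forall S, is_Dsubmodule dop hop cop lop S ->
    (exists v, S v /\ v <> 0) -> forall v, S v.

Definition is_hw_vector (dop hop : int -> V -> V) (cop lop : V -> V)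
  (c h l : F) (v0 : V) : Prop :=
  [/\ v0 <> 0, dop 0 v0 = h *: v0, cop v0 = c *: v0, lop v0 = l *: v0 &
      [/\ (forall n : int, 0 < n -> dop n v0 = 0) &
      (forall j : int, 0 <= j -> hop j v0 = 0)]].

(* Since A has basis
   {v_k : k in 1/2 Z}, V (x) A = (+)_k V (x) v_k, whose elements
   sum_k w_k (x) v_k are represented by finitely supported families
   f : int -> V, f n = w_{n/2}. *)
Definition finsupp (f : int -> V) : Prop :=
  exists s : seq int, forall n, n \notin s -> f n = 0.

(* Action on V (x) A via x (w (x) v) = x w (x) v + w (x) x v, where
   d_m v_k = (alpha + beta m - k) v_{m+k},
   h_r v_k = v_{k+r} (k in Z),  h_r v_k = gamma v_{k+r} (k in 1/2 + Z),
   c, l act as 0 on A. *)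
Definition tens_d (alpha beta : F) (dop : int -> V -> V) (m : int) (f : int -> V)
  : int -> V :=
  fun n => dop m (f n)
           + (alpha + beta * m%:~R - half_int (n - 2 * m)) *: f (n - 2 * m).

Definition tens_h (gamma : F) (hop : int -> V -> V) (j : int) (f : int -> V)
  : int -> V :=
  fun n => hop j (f n)
           + (if odd (absz (n - (2 * j + 1))%R) then gamma else 1)
             *: f (n - (2 * j + 1)).

Definition tens_z (z : V -> V) (f : int -> V) : int -> V := fun n => z (f n).

Definition is_tens_submodule (alpha beta gamma : F)
  (dop hop : int -> V -> V) (cop lop : V -> V) (M : (int -> V) -> Prop) : Prop :=
  [/\ [/\ (forall f, M f -> finsupp f),
      M (fun _ => 0) &
      (forall (a : F) f g, M f -> M g -> M (fun n => a *: f n + g n))],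
      (forall m f, M f -> M (tens_d alpha beta dop m f)),
      (forall j f, M f -> M (tens_h gamma hop j f)) &
      [/\ (forall f, M f -> M (tens_z cop f)) &
          (forall f, M f -> M (tens_z lop f))]].

Definition pure_tensor (w : V) (k : int) : int -> V :=
  fun n => if n == k then w else 0.

End Dalg.

(* Main.v *)
Require Import Defs.
From HB Require Import structures.
From mathcomp Require Import all_boot all_order all_algebra.
From mathcomp Require Import complex Rstruct.
From mathcomp Require Import zify ring.
From Stdlib Require Import FunctionalExtensionality.
Set Implicit Arguments. Unset Strict Implicit. Unset Printing Implicit Defensive.
Import Order.TTheory GRing.Theory Num.Theory.
Local Open Scope ring_scope.

Section Lin.
Variable V : lmodType CC.
Variable f : V -> V.
Hypothesis Hf : is_lin f.
Lemma lin0 : f 0 = 0.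
Proof.
have := Hf 1 0 0; rewrite !scale1r addr0.
by move/(congr1 (fun x => x - f 0)); rewrite subrr addrK => <-.
Qed.
Lemma linZ a u : f (a *: u) = a *: f u.
Proof. by have := Hf a u 0; rewrite addr0 lin0 addr0. Qed.
Lemma linD u v : f (u + v) = f u + f v.
Proof. by have := Hf 1 u v; rewrite !scale1r. Qed.
End Lin.
Arguments lin0 {V f}.
Arguments linZ {V f}.
Arguments linD {V f}.

Section Nil.
Variables (V : lmodType CC) (dop hop : int -> V -> V) (cop lop : V -> V).
Hypothesis HV : is_Dmodule dop hop cop lop.

Definition Nil (w : V) (B : int) :=
  [/\ 0 <= B, (forall m, B <= m -> dop m w = 0) & (forall j, B <= j -> hop j w = 0)].

Lemma Nil_sub : is_Dsubmodule dop hop cop lop (fun w => exists B, Nil w B).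
Proof.
case: HV => [[Hd Hh Hc Hl] Hdd Hdh Hhh [Ccd Chd Cld Clh Ccl]].
have d0 m : dop m 0 = 0 := lin0 (Hd m).
have h0 m : hop m 0 = 0 := lin0 (Hh m).
have c0 : cop 0 = 0 := lin0 Hc.
have l0 : lop 0 = 0 := lin0 Hl.
split.
- exists 0; split; [by [] | move=> m _; exact: d0 | move=> m _; exact: h0].
- move=> a u v [Bu [Bu0 Du Hu]] [Bv [Bv0 Dv Hv]]; exists (Bu + Bv); split.
  + lia.
  + move=> m Hm; rewrite (Hd m) Du ?Dv ?scaler0 ?addr0 //; lia.
  + move=> m Hm; rewrite (Hh m) Hu ?Hv ?scaler0 ?addr0 //; lia.
- move=> n w [B [B0 Dw Hw]]; exists (B + `|n|%:Z + 1); split.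
  + lia.
  + move=> m Hm; have := Hdd m n w.
    rewrite (Dw m) ?(Dw (m + n)) ?d0 ?h0 ?scaler0 ?subr0 ?add0r; try lia.
    by rewrite ifF //; apply/negbTE/eqP; lia.

  + move=> j Hj; have := Hdh n j w.
    rewrite (Hw j) ?(Hw (n + j)) ?d0 ?h0 ?scaler0 ?oppr0 ?sub0r; try lia.
    by move/eqP; rewrite oppr_eq0 => /eqP.
- move=> i w [B [B0 Dw Hw]]; exists (B + `|i|%:Z + 1); split.
  + lia.
  + move=> m Hm; have := Hdh m i w.
    rewrite (Dw m) ?(Hw (m + i)) ?d0 ?h0 ?scaler0 ?subr0; try lia. by [].
  + move=> j Hj; have := Hhh j i w.
    rewrite (Hw j) ?d0 ?h0 ?subr0; try lia.
    by rewrite ifF //; apply/negbTE/eqP; lia.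
- split.
  + move=> w [B [B0 Dw Hw]]; exists B; split => // m Hm.
    * by rewrite -Ccd Dw // ?c0 ?l0.
    * by rewrite -Chd Hw // ?c0 ?l0.
  + move=> w [B [B0 Dw Hw]]; exists B; split => // m Hm.
    * by rewrite -Cld Dw // ?c0 ?l0.
    * by rewrite -Clh Hw // ?c0 ?l0.
Qed.
End Nil.

Section Tens.
Variables (V : lmodType CC) (dop hop : int -> V -> V) (cop lop : V -> V).
Variables (alpha beta gamma : CC) (M : (int -> V) -> Prop).
Hypothesis HV : is_Dmodule dop hop cop lop.
Hypothesis HM : is_tens_submodule alpha beta gamma dop hop cop lop M.
Hypothesis Hgamma : gamma != 0.

Lemma d0 m : dop m 0 = 0.
Proof. by case: HV => [[Hd _ _ _] _ _ _ _]; exact: lin0 (Hd m). Qed.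
Lemma h0 m : hop m 0 = 0.
Proof. by case: HV => [[_ Hh _ _] _ _ _ _]; exact: lin0 (Hh m). Qed.
Lemma c0 : cop 0 = 0.
Proof. by case: HV => [[_ _ Hc _] _ _ _ _]; exact: lin0 Hc. Qed.
Lemma l0 : lop 0 = 0.
Proof. by case: HV => [[_ _ _ Hl] _ _ _ _]; exact: lin0 Hl. Qed.
Lemma hZ m a u : hop m (a *: u) = a *: hop m u.
Proof. case: HV => [[_ Hh _ _] _ _ _ _]; exact (linZ (Hh m) a u). Qed.

Lemma M0 : M (fun _ => 0).
Proof. by case: HM => [[]]. Qed.
Lemma Mlin a f g : M f -> M g -> M (fun n => a *: f n + g n).
Proof. by case: HM => [[_ _ H]] _ _ _; exact: H. Qed.
Lemma Mext f g : (forall n, f n = g n) -> M f -> M g.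
Proof. by move=> E; have -> : f = g by apply: functional_extensionality. Qed.
Lemma MZ a f : M f -> M (fun n => a *: f n).
Proof. move=> Mf; apply: Mext (Mlin a Mf M0) => n; exact: addr0. Qed.
Lemma Md m f : M f -> M (tens_d alpha beta dop m f).
Proof. by case: HM => _ H _ _; exact: H. Qed.
Lemma Mh j f : M f -> M (tens_h gamma hop j f).
Proof. by case: HM => _ _ H _; exact: H. Qed.

Lemma tens_d_pure m w i n : tens_d alpha beta dop m (pure_tensor w i) n =
  pure_tensor (dop m w) i n
  + (alpha + beta * m%:~R - half_int CC i) *: pure_tensor w (i + 2 * m) n.
Proof.
rewrite /tens_d /pure_tensor.
have -> : (n - 2 * m == i) = (n == i + 2 * m) by apply/eqP/eqP => H; lia.
case: eqP => [Hn|Hn]; case: eqP => [Hn'|Hn'];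
  rewrite ?d0 ?scaler0 //; rewrite Hn' addrK //.
Qed.

Lemma tens_h_pure j w i n : tens_h gamma hop j (pure_tensor w i) n =
  pure_tensor (hop j w) i n
  + (if odd `|i| then gamma else 1) *: pure_tensor w (i + (2 * j + 1)) n.
Proof.
rewrite /tens_h /pure_tensor.
have -> : (n - (2 * j + 1) == i) = (n == i + (2 * j + 1)) by apply/eqP/eqP => H; lia.
case: eqP => [Hn|Hn]; case: eqP => [Hn'|Hn'];
  rewrite ?h0 ?scaler0 //; rewrite Hn' addrK //.
Qed.

Definition S2 (w : V) := exists k, forall i, k <= i -> M (pure_tensor w i).

Lemma S2_sub : is_Dsubmodule dop hop cop lop S2.
Proof.
split.
- exists 0 => i _; apply: Mext M0 => n; rewrite /pure_tensor; by case: ifP.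
- move=> a u v [ku Hu] [kv Hv]; exists (Num.max ku kv) => i Hi.
  apply: Mext (Mlin a (Hu i _) (Hv i _)); try lia.
  move=> n; rewrite /pure_tensor; case: ifP => _ //; by rewrite scaler0 addr0.
- move=> m w [k Hk]; exists (Num.max k (k - 2 * m)) => i Hi.
  apply: Mext (Mlin (- (alpha + beta * m%:~R - half_int CC i)) (Hk (i + 2 * m) _)
     (Md m (Hk i _))); try lia.
  by move=> n; rewrite tens_d_pure scaleNr addrC addrK.
- move=> j w [k Hk]; exists (Num.max k (k - (2 * j + 1))) => i Hi.
  apply: Mext (Mlin (- (if odd `|i| then gamma else 1)) (Hk (i + (2 * j + 1)) _)
     (Mh j (Hk i _))); try lia.
  by move=> n; rewrite tens_h_pure scaleNr addrC addrK.
- split.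
  + move=> w [k Hk]; exists k => i Hi.
    case: HM => _ _ _ [H _]; apply: Mext (H _ (Hk i Hi)) => n.
    by rewrite /tens_z /pure_tensor; case: ifP => // _; rewrite c0.
  + move=> w [k Hk]; exists k => i Hi.
    case: HM => _ _ _ [_ H]; apply: Mext (H _ (Hk i Hi)) => n.
    by rewrite /tens_z /pure_tensor; case: ifP => // _; rewrite l0.
Qed.

Lemma shift_h w i j : hop j w = 0 -> M (pure_tensor w i) ->
  M (pure_tensor w (i + (2 * j + 1))).
Proof.
move=> Hj Mw.
set cc := (if odd `|i| then gamma else 1).
have cc0 : cc != 0 by rewrite /cc; case: ifP => _ //; exact: oner_neq0.
apply: Mext (MZ cc^-1 (Mh j Mw)) => n.
by rewrite tens_h_pure Hj {1}/pure_tensor if_same add0r scalerA mulVf // scale1r.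
Qed.

Lemma pure_to_S2 w i B : Nil dop hop w B -> M (pure_tensor w i) -> S2 w.
Proof.
case=> B0 _ HB Mw; exists (i + 4 * B + 2) => i' Hi'.
set d := i' - i - (4 * B + 2).
have [Hd|Hd] : d = 2 * (d %/ 2)%Z \/ d = 2 * (d %/ 2)%Z + 1 by lia.
- have -> : i' = i + (2 * B + 1) + (2 * (B + (d %/ 2)%Z) + 1) by lia.
  apply: shift_h; first by apply: HB; lia.
  apply: shift_h => //; apply: HB; lia.
- have -> : i' = i + (2 * (2 * B + 1 + (d %/ 2)%Z) + 1) by lia.
  apply: shift_h => //; apply: HB; lia.
Qed.


Hypothesis Hnil : forall w, exists B, Nil dop hop w B.

Lemma Nil_mono w B B' : Nil dop hop w B -> B <= B' -> Nil dop hop w B'.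
Proof.
case=> B0 D H le; split; [lia | move=> m Hm; apply: D; lia | move=> m Hm; apply: H; lia].
Qed.

Lemma Nil_seq (f : int -> V) (s : seq int) :
  exists B, 0 <= B /\ forall n, n \in s -> Nil dop hop (f n) B.
Proof.
elim: s => [|x s [Bs [Bs0 HBs]]]; first by exists 0.
have [Bx HBx] := Hnil (f x).
have Bx0 : 0 <= Bx by case: HBx.
exists (Bx + Bs); split; first lia.
move=> n; rewrite in_cons => /orP [/eqP ->|ns].
- apply: Nil_mono HBx _; lia.
- apply: Nil_mono (HBs n ns) _; lia.
Qed.

Lemma half_neq n1 p : p != n1 -> half_int CC n1 - half_int CC p != 0.
Proof.
move=> ne; rewrite /half_int -mulrBl -rmorphB /= mulf_neq0 //.
- by rewrite intr_eq0 subr_eq0 eq_sym.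
- by rewrite invr_eq0 pnatr_eq0.
Qed.

Lemma iso N : forall (f : int -> V) (s : seq int), (size s <= N)%N ->
  (forall n, n \notin s -> f n = 0) -> M f -> forall n1, f n1 != 0 ->
  exists w i, w != 0 /\ M (pure_tensor w i).
Proof.
elim: N => [|N IH] f s Hs Hsupp Mf n1 Hn1.
  have n1s : n1 \in s by apply: contraT => /Hsupp E; rewrite E eqxx in Hn1.
  by move: Hs; rewrite leqn0 => /nilP Es; rewrite Es in n1s.
have n1s : n1 \in s by apply: contraT => /Hsupp E; rewrite E eqxx in Hn1.
have [B [B0 HB]] := Nil_seq f s.
have HBall n : Nil dop hop (f n) B.
  case: (boolP (n \in s)) => [/HB //|/Hsupp ->].
  by split => // m _; rewrite ?d0 ?h0.
have hB n' : hop B (f n') = 0 by case: (HBall n') => _ _ H; apply: H; lia.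
pose P := tens_h gamma hop B (tens_h gamma hop B f).
have MP : M P by apply: Mh; apply: Mh.
have EP n : P n = gamma *: f (n - 2 * (2 * B + 1)).
  rewrite /P /tens_h !hB !add0r hZ hB scaler0 add0r scalerA.
  have -> : n - (2 * B + 1) - (2 * B + 1) = n - 2 * (2 * B + 1) by lia.
  congr (_ *: _).
  have -> : odd `|(n - 2 * (2 * B + 1))%R| = ~~ odd `|(n - (2 * B + 1))%R| by lia.
  by case: (odd `|(n - (2 * B + 1))%R|) => /=; rewrite ?mulr1 ?mul1r.
pose D := tens_d alpha beta dop (2 * B + 1) f.
have MD : M D by apply: Md.
set A := alpha + beta * (2 * B + 1)%:~R.
have ED n : D n = (A - half_int CC (n - 2 * (2 * B + 1))) *: f (n - 2 * (2 * B + 1)).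
  rewrite /D /tens_d; case: (HBall n) => _ H _; rewrite H ?add0r //; lia.
pose g := fun n => (- ((A - half_int CC n1) / gamma)) *: P n + D n.
have Mg : M g by apply: Mlin.
have Eg n : g n = (half_int CC n1 - half_int CC (n - 2 * (2 * B + 1))) *: f (n - 2 * (2 * B + 1)).
  rewrite /g EP ED scalerA mulNr divfK // -scalerDl; congr (_ *: _); ring.
pose s' := map (fun p => p + 2 * (2 * B + 1)) (rem n1 (undup s)).
have hsupp' n : n \notin s' -> g n = 0.
  move=> nin; rewrite Eg.
  case: (eqVneq (n - 2 * (2 * B + 1)) n1) => [->|ne]; first by rewrite subrr scale0r.
  have : (n - 2 * (2 * B + 1)) \notin s.
    apply: contra nin => ins; apply/mapP; exists (n - 2 * (2 * B + 1)); last lia.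
    by rewrite (mem_rem_uniq _ (undup_uniq s)) inE ne mem_undup ins.
  by move/Hsupp ->; rewrite scaler0.
case: (boolP (all (fun n => g n == 0) s')) => [/allP Hall|].
  have g0 n : g n = 0.
    by case: (boolP (n \in s')) => [/Hall/eqP|/hsupp'].
  exists (f n1), n1; split => //; apply: Mext Mf => n.
  rewrite /pure_tensor; case: eqP => [->//|/eqP ne].
  have := g0 (n + 2 * (2 * B + 1)); rewrite Eg addrK => /eqP.
  by rewrite scaler_eq0 (negbTE (half_neq ne)) /= => /eqP.
rewrite -has_predC => /hasP [n _ /= gn].
apply: (IH g s' _ hsupp' Mg n gn).
have := size_undup s; have := size_rem (x := n1) (s := undup s).
rewrite mem_undup n1s => /(_ isT) Hr.
move=> Hu; rewrite /s' size_map Hr; move: (leq_trans Hu Hs); by case: (size (undup s)).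
Qed.

End Tens.


Unset Implicit Arguments.
Set Strict Implicit.

Theorem lemma3p5 (c h alpha beta l gamma : CC)
  (Hl : l != 0) (Hgamma : gamma != 0)
  (V : lmodType CC) (dop hop : int -> V -> V) (cop lop : V -> V)
  (HV : is_Dmodule dop hop cop lop)
  (v0 : V) (Hv0 : is_hw_vector dop hop cop lop c h l v0)
  (Hirr : Dirreducible dop hop cop lop)
  (M : (int -> V) -> Prop)
  (HM : is_tens_submodule alpha beta gamma dop hop cop lop M)
  (HMnz : exists f n, M f /\ f n <> 0) :
  (exists k : int, M (pure_tensor v0 k)) /\
  (exists k : int, forall i : int, k <= i -> M (pure_tensor v0 i)).
Proof.
case: Hv0 => nz _ _ _ [Hd Hh].
have Hnil : forall w, exists B, Nil dop hop w B.
  apply: (Hirr _ (@Nil_sub V dop hop cop lop HV)).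
  exists v0; split => //; exists 1; split => //.
  - move=> m Hm; first [apply: Hd | apply: Hh]; lia.
case: HMnz => f [n [Mf fn]].
have [s Hs] : finsupp f by case: HM => [[H _ _] _ _ _]; exact: H.
have [w [i [wnz Mw]]] := @iso V dop hop cop lop alpha beta gamma M HV HM Hgamma Hnil
  (size s) f s (leqnn _) Hs Mf n (introN eqP fn).
have [B HB] := Hnil w.
have S2w := @pure_to_S2 V dop hop cop lop alpha beta gamma M HV HM Hgamma w i B HB Mw.
have [k Hk] : S2 M v0.
  apply: (Hirr _ (@S2_sub V dop hop cop lop alpha beta gamma M HV HM Hgamma)).
  by exists w; split => //; apply/eqP.
split; first by exists k; apply: Hk.
by exists k.
Qed.
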